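(* Let $\gamma=(\gamma_1,\dots,\gamma_b)$ be a parallel map on $V=V_1\oplus\cdots\oplus V_b$, $V_i\cong(\mathbb F_2)^m$ with $m\ge4$, and $0\gamma=0$. Suppose every $\gamma_i$ is differentially $4$-uniform and satisfies $\hat n(\gamma_i)=0$. If $\gamma$ maps $\mathcal L(W)$ onto a non-trivial partition $\mathcal{LA}_U(W_1|W_2)$, then $W$ and $W_1$ are walls and $W=W_1=W_2$; in particular $\mathcal{LA}_U(W_1|W_2)$ is linear.
   Context: Let $b>1$, $n=mb$, $V=(\mathbb F_2)^n=V_1\oplus\cdots\oplus V_b$, $V_i\cong(\mathbb F_2)^m$. Permutations act on the right. A parallel map is $\gamma\in\mathrm{Sym}(V)$ with $(v_1\oplus\cdots\oplus v_b)\gamma=v_1\gamma_1\oplus\cdots\oplus v_b\gamma_b$, $\gamma_i\in\mathrm{Sym}(V_i)$. A wall is $\bigoplus_{i\in I}V_i$ with $\emptyset\ne I\subsetneq\{1,\dots,b\}$. For $f:(\mathbb F_2)^m\to(\mathbb F_2)^m$, $\hat f_a(x)=f(x+a)+f(x)$; $f$ is differentially $\delta$-uniform if $\delta=\max_{a\ne0,b}|\{x:\hat f_a(x)=b\}|$; and $\hat n(f)=\max_{a\ne0}|\{v\in(\mathbb F_2)^m\setminus\{0\}: \text{the Boolean function } x\mapsto\langle\hat f_a(x),v\rangle \text{ is constant}\}|$, where $\langle\cdot,\cdot\rangle$ is the standard dot product. A permutation maps $\mathcal A$ onto $\mathcal B$ if it sends the blocks of $\mathcal A$ exactly onto those of $\mathcal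 B$; trivial partitions are the singleton partition and $\{V\}$. $\mathcal L(W)=\{W+v:v\in V\}$ (linear partition). For a subspace $U$ of dimension $n-1$ and subspaces $W_1,W_2\subseteq U$, $\mathcal{LA}_U(W_1|W_2)=\{W_1+v:v\in U\}\cup\{(W_2+\bar v)+v:v\in U\}$ for any $\bar v\in V\setminus U$. *)

(* Defs.v *)
From HB Require Import structures.
From mathcomp Require Import all_boot all_order all_fingroup all_algebra.
Set Implicit Arguments. Unset Strict Implicit. Unset Printing Implicit Defensive.
Import GRing.Theory.
Local Open Scope ring_scope.

(* V = (F_2)^(m*b) = V_1 (+) ... (+) V_b is modelled as the space of
   b x m matrices over F_2: the i-th row is the component in V_i = (F_2)^m. *)
Definition blk (m : nat) := 'rV['F_2]_m.
Definition Vsp (b m : nat) := 'M['F_2]_(b, m).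

Definition par_map (b m : nat) (g : 'I_b -> {perm blk m}) : Vsp b m -> Vsp b m :=
  fun x => \matrix_(i < b) (g i (row i x) : 'rV['F_2]_m).

Definition fder (m : nat) (f : blk m -> blk m) (a x : blk m) : blk m :=
  f (x + a) + f x.

Definition diff_unif (m : nat) (f : blk m -> blk m) : nat :=
  \max_(a : blk m | a != 0%R) \max_(c : blk m) #|[set x : blk m | (fder f a x == c)%R]|.

Definition dotp (m : nat) (u v : blk m) : 'F_2 := \sum_(j < m) u 0 j * v 0 j.

Definition nhat (m : nat) (f : blk m -> blk m) : nat :=
  \max_(a : blk m | a != 0%R)
    #|[set v : blk m | (v != 0%R) &&
        [forall x : blk m, forall y : blk m,
           dotp (fder f a x) v == dotp (fder f a y) v]]|.

Definition is_wall (b m : nat) (W : {vspace Vsp b m}) : Prop :=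
  exists I : {set 'I_b}, [/\ I != set0, I != setT &
    forall x : Vsp b m, (x \in W) = [forall i, (i \notin I) ==> (row i x == 0)]].

Definition coset (b m : nat) (W : {vspace Vsp b m}) (v : Vsp b m) : {set Vsp b m} :=
  [set x : Vsp b m | x - v \in W].

Definition lin_part (b m : nat) (W : {vspace Vsp b m}) : {set {set Vsp b m}} :=
  [set coset W v | v : Vsp b m].

Definition LA_part (b m : nat) (U W1 W2 : {vspace Vsp b m}) (vbar : Vsp b m)
  : {set {set Vsp b m}} :=
  [set coset W1 v | v in [set v : Vsp b m | v \in U]] :|:
  [set coset W2 (vbar + v) | v in [set v : Vsp b m | v \in U]].

Definition singleton_part (T : finType) : {set {set T}} := [set [set x] | x : T].
Definition whole_part (T : finType) : {set {set T}} := [set [set: T]].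

Definition maps_onto (T : finType) (f : T -> T) (A B : {set {set T}}) : Prop :=
  [set f @: (X : {set T}) | X in A] = B.

(* Main.v *)
Require Import Defs.
From HB Require Import structures.
From mathcomp Require Import all_boot all_order all_fingroup all_algebra.
Import GRing.Theory.
Local Open Scope ring_scope.
Set Implicit Arguments. Unset Strict Implicit. Unset Printing Implicit Defensive.

Lemma oppF2 (r c : nat) (M : 'M['F_2]_(r, c)) : - M = M.
Proof.
apply/matrixP => i j; rewrite mxE; apply: oppr_pchar2.
exact: (@pchar_Fp 2).
Qed.

Lemma rowD (R : pzRingType) r c (i : 'I_r) (A B : 'M[R]_(r, c)) : row i (A + B) = row i A + row i B.
Proof. by apply/rowP => k; rewrite !mxE. Qed.
Lemma rowB (R : pzRingType) r c (i : 'I_r) (A B : 'M[R]_(r, c)) : row i (A - B) = row i A - row i B.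
Proof. by apply/rowP => k; rewrite !mxE. Qed.
Lemma rowZ (R : pzRingType) r c (i : 'I_r) k (A : 'M[R]_(r, c)) : row i (k *: A) = k *: row i A.
Proof. by apply/rowP => j; rewrite !mxE. Qed.

Definition inj (b m : nat) (i : 'I_b) (z : blk m) : Vsp b m :=
  \matrix_(j < b) (if j == i then z else 0).

Lemma row_inj b m (i : 'I_b) (z : blk m) (j : 'I_b) : row j (inj i z) = (if j == i then z else 0 : 'rV_m).
Proof. by rewrite rowK. Qed.

Lemma injD b m (i : 'I_b) (y z : blk m) : inj i (y + z) = inj i y + inj i z :> Vsp b m.
Proof.
apply/row_matrixP => j; rewrite rowD !row_inj; case: (j == i) => //; by rewrite addr0.
Qed.

Lemma injZ b m (i : 'I_b) k (z : blk m) : inj i (k *: z) = k *: inj i z :> Vsp b m.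
Proof.
apply/row_matrixP => j; rewrite rowZ !row_inj; case: (j == i) => //; by rewrite scaler0.
Qed.

Lemma inj0 b m (i : 'I_b) : inj i 0 = 0 :> Vsp b m.
Proof. by apply/row_matrixP => j; rewrite row_inj row0; case: ifP. Qed.

Lemma row_par b m (g : 'I_b -> {perm blk m}) (x : Vsp b m) (i : 'I_b) : row i (par_map g x) = g i (row i x).
Proof. by rewrite /par_map rowK. Qed.

Lemma dotpB m (x y v : blk m) : dotp (x - y) v = dotp x v - dotp y v.
Proof.
rewrite /dotp -sumrB; apply: eq_bigr => j _; by rewrite !mxE mulrBl.
Qed.

Lemma span_full m (f : blk m -> blk m) a :
  nhat f = 0%N -> a != 0 ->
  row_full (\matrix_(k < #|{: blk m}|) (fder f a (enum_val k) - fder f a 0)).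
Proof.
move=> hn ha; set A := \matrix_(k < _) _; apply/negPn/negP => hA.
have hr : (\rank A < m)%N.
  by rewrite ltn_neqAle rank_leq_col andbT; exact: hA.
have hk : kermx A^T != 0.
  by rewrite -mxrank_eq0 mxrank_ker mxrank_tr -lt0n subn_gt0.
have [k hk'] : exists k, row k (kermx A^T) != 0.
  apply/existsP; apply: contraR hk; rewrite negb_exists => /forallP H.
  by apply/eqP/row_matrixP => k; rewrite row0; apply/eqP; move: (H k); rewrite negbK.
set u := row k (kermx A^T).
have hu : u *m A^T = 0 by rewrite /u -row_mul mulmx_ker row0.
have hd : forall y, dotp (fder f a y) u = dotp (fder f a 0) u.
  move=> y; apply/eqP; rewrite -subr_eq0 -dotpB.
  have := congr1 (fun M : 'M_(1, _) => M 0 (enum_rank y)) hu.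
  rewrite !mxE => <-; rewrite /dotp; apply/eqP; apply: eq_bigr => j _.
  by rewrite !mxE enum_rankK mulrC.
have : (0 < nhat f)%N.
  rewrite /nhat; apply: (@leq_trans #|[set v : blk m | (v != 0%R) &&
        [forall x : blk m, forall y : blk m,
           dotp (fder f a x) v == dotp (fder f a y) v]]|).
    apply/card_gt0P; exists u; rewrite inE hk' /=.
    by apply/forallP => x; apply/forallP => y; rewrite hd (hd y).
  exact: (@leq_bigmax_cond _ (fun a : blk m => a != 0) (fun a => #|[set v : blk m | (v != 0%R) &&
        [forall x : blk m, forall y : blk m,
           dotp (fder f a x) v == dotp (fder f a y) v]]|) a ha).
by rewrite hn.
Qed.

Lemma span_in b m (f : blk m -> blk m) a (i : 'I_b) (X : {vspace Vsp b m}) :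
  nhat f = 0%N -> a != 0 ->
  (forall y, inj i (fder f a y - fder f a 0) \in X) -> forall z, inj i z \in X.
Proof.
move=> hn ha hy z.
have /submxP [w ->] := submx_full z (span_full hn ha).
rewrite mulmx_sum_row (big_morph (inj i) (injD i) (inj0 _ i)).
apply: memv_suml => k _; rewrite injZ; apply: memvZ; by rewrite rowK.
Qed.

Lemma block b m (g : 'I_b -> {perm blk m}) (W U W1 W2 : {vspace Vsp b m}) vbar :
  (W1 <= U)%VS -> (W2 <= U)%VS -> vbar \notin U ->
  maps_onto (par_map g) (lin_part W) (LA_part U W1 W2 vbar) ->
  forall p, exists c, par_map g @: Defs.coset W p =
     Defs.coset (if par_map g p \in U then W1 else W2) c.
Proof.
move=> h1 h2 hv hmap p.
have hin : par_map g @: Defs.coset W p \in LA_part U W1 W2 vbar.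
  rewrite -hmap; apply/imsetP; exists (Defs.coset W p) => //; by apply/imsetP; exists p.
have hp : par_map g p \in par_map g @: Defs.coset W p.
  by apply: imset_f; rewrite inE subrr mem0v.
move: hin; rewrite inE => /orP [] /imsetP [v]; rewrite inE => hvU hE; rewrite hE in hp *;
  move: hp; rewrite inE => hp.
- have -> : par_map g p \in U.
    by rewrite -(subrK v (par_map g p)); apply: memvD => //; exact: (subvP h1).
  by exists v.
- case hU : (par_map g p \in U); last by exists (vbar + v).
  exfalso; move/negP: hv; apply.
  have hw : par_map g p - (vbar + v) \in U by exact: (subvP h2).
  have hv2 : vbar + v \in U by rewrite -(subKr (par_map g p) (vbar + v)); apply: memvB.
  by rewrite -(addrK v vbar); apply: memvB.
Qed.

Lemma blk_a b m (g : 'I_b -> {perm blk m}) (W U W1 W2 : {vspace Vsp b m}) vbar :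
  (W1 <= U)%VS -> (W2 <= U)%VS -> vbar \notin U ->
  maps_onto (par_map g) (lin_part W) (LA_part U W1 W2 vbar) ->
  forall p w, w \in W ->
  par_map g (p + w) - par_map g p \in (if par_map g p \in U then W1 else W2).
Proof.
move=> h1 h2 hv hmap p w hw.
have [c hc] := block h1 h2 hv hmap p.
have e1 : par_map g (p + w) \in Defs.coset (if par_map g p \in U then W1 else W2) c.
  by rewrite -hc; apply: imset_f; rewrite inE addrAC subrr add0r.
have e2 : par_map g p \in Defs.coset (if par_map g p \in U then W1 else W2) c.
  by rewrite -hc; apply: imset_f; rewrite inE subrr mem0v.
move: e1 e2; rewrite !inE => e1 e2.
have -> : par_map g (p + w) - par_map g p =
   (par_map g (p + w) - c) - (par_map g p - c) by rewrite opprB addrA subrK.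
exact: memvB.
Qed.

Lemma blk_b b m (g : 'I_b -> {perm blk m}) (W U W1 W2 : {vspace Vsp b m}) vbar :
  (W1 <= U)%VS -> (W2 <= U)%VS -> vbar \notin U ->
  maps_onto (par_map g) (lin_part W) (LA_part U W1 W2 vbar) ->
  forall p z, z \in (if par_map g p \in U then W1 else W2) ->
  exists q, q - p \in W /\ par_map g q = par_map g p + z.
Proof.
move=> h1 h2 hv hmap p z hz.
have [c hc] := block h1 h2 hv hmap p.
have e2 : par_map g p \in Defs.coset (if par_map g p \in U then W1 else W2) c.
  by rewrite -hc; apply: imset_f; rewrite inE subrr mem0v.
have : par_map g p + z \in Defs.coset (if par_map g p \in U then W1 else W2) c.
  by move: e2; rewrite !inE addrAC => e2; apply: memvD.
rewrite -hc => /imsetP [q]; rewrite inE => hq ->; by exists q.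
Qed.

Lemma memvDr' (K : fieldType) (vT : vectType K) (U : {vspace vT}) (u v : vT) :
  u \in U -> (v + u \in U) = (v \in U).
Proof.
move=> hu; apply/idP/idP => h; last exact: memvD.
by rewrite -(addrK u v); apply: memvB.
Qed.

Definition upd b m (p : Vsp b m) (i : 'I_b) (y : blk m) : Vsp b m :=
  \matrix_(j < b) (if j == i then y else row j p).

Lemma row_upd b m (p : Vsp b m) i y j :
  row j (upd p i y) = (if j == i then y else row j p).
Proof. by rewrite rowK. Qed.

Lemma oppF2r m (x : blk m) : - x = x.
Proof. exact: oppF2. Qed.

Lemma diff_upd b m (g : 'I_b -> {perm blk m}) p i y y' w :
  (par_map g (upd p i y + w) - par_map g (upd p i y)) -
  (par_map g (upd p i y' + w) - par_map g (upd p i y')) =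
  inj i (fder (g i) (row i w) y - fder (g i) (row i w) y').
Proof.
apply/row_matrixP => j; rewrite row_inj !rowB !row_par !rowD !row_upd.
case: eqP => [->|_]; last by rewrite subrr.
by rewrite /fder !oppF2r.
Qed.

Lemma step_upd b m (g : 'I_b -> {perm blk m}) p i y :
  par_map g (upd p i y) = par_map g p + inj i (g i y - g i (row i p)).
Proof.
apply/row_matrixP => j; rewrite rowD row_inj !row_par row_upd.
case: eqP => [->|]; last by rewrite addr0.
by rewrite addrC subrK.
Qed.

Lemma par_inj b m (g : 'I_b -> {perm blk m}) : injective (par_map g).
Proof.
move=> x y h; apply/row_matrixP => i.
by apply: (@perm_inj _ (g i)); rewrite -!row_par h.
Qed.

Lemma par_surj b m (g : 'I_b -> {perm blk m}) y : exists x, par_map g x = y.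
Proof.
by have /codomP [x ->] := injF_onto (@par_inj b m g) y; exists x.
Qed.

Lemma rowsum b m (x : Vsp b m) : x = \sum_i inj i (row i x).
Proof.
apply/row_matrixP => j.
rewrite (big_morph (row j) (@rowD _ _ _ j) (row0 _ m j)).
rewrite (bigD1 j) //= row_inj eqxx big1 ?addr0 // => i hi.
by rewrite row_inj eq_sym (negbTE hi).
Qed.

Lemma coset_same b m (X : {vspace Vsp b m}) c v :
  v \in Defs.coset X c -> Defs.coset X c = Defs.coset X v.
Proof.
rewrite inE => hv; apply/setP => x; rewrite !inE.
have -> : x - c = (x - v) + (v - c) by rewrite addrA subrK.
exact: memvDr'.
Qed.

Unset Implicit Arguments.

Theorem lemma3p15 (b m : nat) (g : 'I_b -> {perm blk m})
    (W U W1 W2 : {vspace Vsp b m}) (vbar : Vsp b m) :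
  (1 < b)%N -> (4 <= m)%N ->
  par_map g 0 = 0 ->
  (forall i, diff_unif (g i) = 4%N) ->
  (forall i, nhat (g i) = 0%N) ->
  \dim U = (m * b).-1 -> (W1 <= U)%VS -> (W2 <= U)%VS -> vbar \notin U ->
  LA_part U W1 W2 vbar != singleton_part (Vsp b m) ->
  LA_part U W1 W2 vbar != whole_part (Vsp b m) ->
  maps_onto (par_map g) (lin_part W) (LA_part U W1 W2 vbar) ->
  [/\ is_wall W, is_wall W1, W = W1, W1 = W2 &
      LA_part U W1 W2 vbar = lin_part W1].
Proof.
move=> _ _ h0 _ hn _ h1 h2 hv hsing _ hmap.
have g0 : forall i, g i 0 = 0.
  by move=> i; rewrite -(row0 _ m i) -row_par h0 row0.
have ha := blk_a h1 h2 hv hmap.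
have hb := blk_b h1 h2 hv hmap.
have hsub : forall x w, w \in W -> par_map g (x + w) - par_map g x \in U.
  move=> x w hw; have := ha x w hw; case: (_ \in U); [exact: (subvP h1) | exact: (subvP h2)].
set K := [set i | [exists w : Vsp b m, (w \in W) && (row i w != 0)]].
have hU : forall i, i \in K -> forall z, inj i z \in U.
  move=> i; rewrite inE => /existsP [w /andP [hw hwi]].
  apply: (span_in (hn i) hwi) => y.
  rewrite -(diff_upd g 0 i y 0 w); apply: memvB; exact: hsub.
have hW' : forall p i, i \in K -> forall z,
    inj i z \in (if par_map g p \in U then W1 else W2).
  move=> p i hi; have := hi; rewrite inE => /existsP [w /andP [hw hwi]].
  apply: (span_in (hn i) hwi) => y.
  have e : forall y, (par_map g (upd p i y) \in U) = (par_map g p \in U).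
    by move=> y0; rewrite step_upd memvDr' //; apply: hU.
  rewrite -(diff_upd g p i y 0 w); apply: memvB.
  - by have := ha (upd p i y) w hw; rewrite e.
  - by have := ha (upd p i 0) w hw; rewrite e.
set VK := fun x : Vsp b m => [forall i, (i \notin K) ==> (row i x == 0)].
have inVK : forall x (X : {vspace Vsp b m}), VK x ->
    (forall i, i \in K -> forall z, inj i z \in X) -> x \in X.
  move=> x X /forallP hx hX; rewrite (rowsum x); apply: memv_suml => i _.
  case hi : (i \in K); first exact: hX.
  by have := hx i; rewrite hi /= => /eqP ->; rewrite inj0 mem0v.
have hg0U : par_map g 0 \in U by rewrite h0 mem0v.
have [q0 hq0] := par_surj g vbar.
have hq0U : (par_map g q0 \in U) = false by rewrite hq0; exact: negbTE.
have notK : forall i x, i \notin K -> x \in W -> row i x = 0.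
  move=> i x hi hx; apply/eqP; apply: contraNT hi => hxi.
  by rewrite inE; apply/existsP; exists x; rewrite hx.
have eW1 : forall x, (x \in W1) = VK x.
  move=> x; apply/idP/idP => hx.
  - have := hb 0 x; rewrite hg0U => /(_ hx) [q [hq e]].
    apply/forallP => i; apply/implyP => hi.
    rewrite h0 add0r in e.
    by rewrite -e row_par subr0 in hq *; rewrite (notK i q hi) // g0.
  - apply: inVK hx _ => i hi z; have := hW' 0 i hi z; by rewrite hg0U.
have eW2 : forall x, (x \in W2) = VK x.
  move=> x; apply/idP/idP => hx.
  - have := hb q0 x; rewrite hq0U => /(_ hx) [q [hq e]].
    apply/forallP => i; apply/implyP => hi.
    have hr := notK i _ hi hq; rewrite rowB in hr; move/eqP: hr; rewrite subr_eq0 => /eqP hr.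
    have : row i (par_map g q) = row i (par_map g q0 + x) by rewrite e.
    rewrite rowD !row_par hr => e'; apply/eqP.
    have := congr1 (fun t => t - g i (row i q0)) e'.
    by rewrite subrr addrAC subrr add0r => ->.
  - apply: inVK hx _ => i hi z; have := hW' q0 i hi z; by rewrite hq0U.
have eW : forall x, (x \in W) = VK x.
  move=> x; apply/idP/idP => hx.
  - by apply/forallP => i; apply/implyP => hi; rewrite notK.
  - have hgx : par_map g x \in W1.
      rewrite eW1; apply/forallP => i; apply/implyP => hi.
      by move/forallP: hx => /(_ i); rewrite hi row_par => /eqP ->; rewrite g0.
    have := hb 0 (par_map g x); rewrite hg0U => /(_ hgx) [q [hq e]].
    by rewrite h0 add0r in e; rewrite -(par_inj e) -(subr0 q).
have EW1 : W = W1 by apply/vspaceP => x; rewrite eW eW1.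
have EW2 : W1 = W2 by apply/vspaceP => x; rewrite eW1 eW2.
have wallW : is_wall W.
  exists K; split => //.
  - apply/negP => /eqP K0; move/negP: hsing; apply; apply/eqP.
    have hW0 : forall x, (x \in W) = (x == 0).
      move=> x; apply/idP/eqP => [hx|->]; last exact: mem0v.
      apply/row_matrixP => i; rewrite row0; apply: notK hx; by rewrite K0 inE.
    have hc : forall v, Defs.coset W v = [set v].
      by move=> v; apply/setP => x; rewrite !inE hW0 subr_eq0.
    rewrite -hmap /singleton_part; apply/setP => S; apply/imsetP/imsetP.
    - move=> [X /imsetP [p _ ->] ->]; exists (par_map g p) => //; by rewrite hc imset_set1.
    - move=> [x _ ->]; have [p hp] := par_surj g x; exists (Defs.coset W p).
        by apply/imsetP; exists p.
      by rewrite hc imset_set1 hp.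
  - apply/negP => /eqP KT; move/negP: hv; apply; apply: (subvP h1).
    by rewrite eW1; apply/forallP => i; rewrite KT inE.
split => //; first by rewrite -EW1.
rewrite -hmap; apply/setP => S; apply/imsetP/imsetP.
- move=> [X /imsetP [p _ ->] ->]; have [c hc] := block h1 h2 hv hmap p.
  exists c => //; by rewrite hc -EW2 if_same.
- move=> [v _ ->]; have [p hp] := par_surj g v.
  have [c hc] := block h1 h2 hv hmap p.
  exists (Defs.coset W p); first by apply/imsetP; exists p.
  have hpi : par_map g p \in par_map g @: Defs.coset W p.
    by apply: imset_f; rewrite inE subrr mem0v.
  rewrite hc -EW2 if_same in hpi *; rewrite hp in hpi; by rewrite (coset_same hpi).
Qed.
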